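(* Let $\mathbb{F}$ be a field, $d\geq3$ and $V$ a vector space over $\mathbb{F}$ of dimension $d+1$. Let $E^*_0,\dots,E^*_d$ be a system of mutually orthogonal idempotents in $\mathrm{End}(V)$ and $A\in\mathrm{End}(V)$ with $E^*_iAE^*_j=0$ if $|i-j|>1$ and $E^*_iAE^*_j\neq0$ if $|i-j|=1$. Assume $A$ is multiplicity-free and bipartite with primitive idempotents $E_0,\dots,E_d$ and eigenvalues $\theta_0,\dots,\theta_d$. Let $\theta^*_0,\dots,\theta^*_d\in\mathbb{F}$ be mutually distinct and $A^*=\sum_i\theta^*_iE^*_i$. Assume $E_0$ is normalizing and that in $\Delta$ the vertex $E_0$ is adjacent to $E_1$ and no other vertex. Then for $1\le i\le d-1$, $$\theta_0\frac{\theta^*_{i-1}-\theta^*_1}{\theta^*_i-\theta^*_0}\neq\theta_1\qquad\text{and}\qquad\theta_0\frac{\theta^*_{i+1}-\theta^*_1}{\theta^*_i-\theta^*_0}\neq\theta_1.$$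
   Context: A system of mutually orthogonal idempotents: $E^*_iE^*_j=\delta_{ij}E^*_i$, $\operatorname{rank}E^*_i=1$. $A$ multiplicity-free: $d+1$ distinct eigenvalues in $\mathbb{F}$; $E_i$ is the projection onto the $\theta_i$-eigenspace along the other eigenspaces. Bipartite: $\operatorname{tr}(E^*_iA)=0$ for all $i$. $\Delta$: graph on $E_0,\dots,E_d$ with $E_i\neq E_j$ adjacent iff $E_iA^*E_j\neq0$. The matrix $Y$ representing $A$ w.r.t. a basis $v_0,\dots,v_d$ satisfies $Av_j=\sum_iY_{ij}v_i$. An eigenvalue $\theta$ is normalizing if some basis with $v_i\in E^*_iV$ makes every row sum of the matrix representing $A$ equal to $\theta$; $E_i$ is normalizing if $\theta_i$ is. *)

(* Defs.v *)
From HB Require Import structures.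
From mathcomp Require Import all_boot all_order all_algebra.
Set Implicit Arguments. Unset Strict Implicit. Unset Printing Implicit Defensive.
Import Order.TTheory GRing.Theory Num.Theory.
Local Open Scope ring_scope.

(* V = F^(d+1) as column vectors; End(V) = 'M[F]_(d.+1), acting by M *m v. *)

Definition orth_idempotent_system (F : fieldType) (d : nat)
  (Es : 'I_d.+1 -> 'M[F]_d.+1) : Prop :=
  (forall i j, Es i *m Es j = if i == j then Es i else 0) /\
  (forall i, \rank (Es i) = 1%N).

(* A is multiplicity-free with eigenvalues th_0..th_d (distinct) and E_i the
   primitive idempotents: E_i is the projection onto the th_i-eigenspace
   along the other eigenspaces.  Equivalently (standard spectral data):
   the E_i are nonzero, mutually orthogonal idempotents summing to I, with
   A E_i = E_i A = th_i E_i. *)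
Definition primitive_idempotents (F : fieldType) (d : nat)
  (A : 'M[F]_d.+1) (th : 'I_d.+1 -> F) (E : 'I_d.+1 -> 'M[F]_d.+1) : Prop :=
  injective th /\
  (forall i, E i != 0) /\
  (forall i j, E i *m E j = if i == j then E i else 0) /\
  (\sum_i E i = 1%:M) /\
  (forall i, A *m E i = th i *: E i) /\
  (forall i, E i *m A = th i *: E i).

Definition bipartite (F : fieldType) (d : nat)
  (Es : 'I_d.+1 -> 'M[F]_d.+1) (A : 'M[F]_d.+1) : Prop :=
  forall i, \tr (Es i *m A) = 0.

(* theta is normalizing: there is a basis v_0..v_d (the columns of an
   invertible P) with v_j \in E^*_j V, such that the matrix Y representing A
   (A v_j = sum_i Y_ij v_i, i.e. A P = P Y) has every row sum equal to theta. *)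
Definition normalizing (F : fieldType) (d : nat)
  (Es : 'I_d.+1 -> 'M[F]_d.+1) (A : 'M[F]_d.+1) (theta : F) : Prop :=
  exists (P Y : 'M[F]_d.+1),
    [/\ P \in unitmx,
        (forall j, Es j *m col j P = col j P),
        A *m P = P *m Y &
        (forall i, \sum_j Y i j = theta)].

Definition Delta_adj (F : fieldType) (d : nat)
  (E : 'I_d.+1 -> 'M[F]_d.+1) (Astar : 'M[F]_d.+1) (i j : 'I_d.+1) : bool :=
  (i != j) && (E i *m Astar *m E j != 0).

(* Main.v *)
Require Import Defs.
From HB Require Import structures.
From mathcomp Require Import all_boot all_order all_algebra.
From mathcomp Require Import ring zify.
Import Order.TTheory GRing.Theory Num.Theory.
Local Open Scope ring_scope.


Definition eigf {F : fieldType} {d : nat} (Y : 'M[F]_d.+1) (th : F) (h : 'I_d.+1 -> F) :=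
  forall j, \sum_k h k * Y k j = th * h j.

Definition trid {F : fieldType} {d : nat} (Y : 'M[F]_d.+1) :=
  (forall k j : 'I_d.+1, ~~((k.+1 == j) || (j.+1 == k))%N -> Y k j = 0) /\
  (forall k j : 'I_d.+1, ((k.+1 == j) || (j.+1 == k))%N -> Y k j != 0).

Lemma inord_out d k : (d < k)%N -> @inord d k = ord0.
Proof. by move=> h; apply: val_inj; rewrite /= /inord val_insubd ltnS leqNgt h. Qed.

Lemma inord_neq d (j : 'I_d.+1) : (2 <= d)%N -> @inord d j.-1 != inord j.+1.
Proof.
move=> d2; apply/eqP => /(congr1 val) /=.
have jd := ltn_ord j.
have e1 : (j.-1 < d.+1)%N by rewrite (leq_ltn_trans (leq_pred _)).
rewrite (inordK e1).
case: (ltnP j.+1 d.+1) => h.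
  rewrite inordK //; lia.
rewrite inord_out //= => e.
have : nat_of_ord j = d by lia.
by move=> jd'; move: e; rewrite jd'; case: (d) d2 => [|[|n]].
Qed.

Lemma colsum {F : fieldType} {d} (Y : 'M[F]_d.+1) (h : 'I_d.+1 -> F) j :
  (2 <= d)%N -> trid Y ->
  \sum_k h k * Y k j = h (inord j.-1) * Y (inord j.-1) j + h (inord j.+1) * Y (inord j.+1) j.
Proof.
move=> d2 [Yz _].
rewrite (bigD1 (inord j.-1)) //= (bigD1 (inord j.+1)) /=; last by rewrite eq_sym inord_neq.
rewrite big1 ?addr0 // => k /andP [k1 k2]; rewrite Yz ?mulr0 //.
apply/negP => /orP [/eqP e|/eqP e].
  by move/eqP: k1; apply; apply: val_inj; rewrite /= -e /= inordK // ltnS leqnSn.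
by move/eqP: k2; apply; apply: val_inj; rewrite /= -e /= inordK // e ltn_ord.
Qed.

Lemma rec0 {F : fieldType} {d} (Y : 'M[F]_d.+1) th h :
  (2 <= d)%N -> trid Y -> eigf Y th h -> h ord0 = 0 -> forall k, h k = 0.
Proof.
move=> d2 tY eh h0.
have [_ Ynz] := tY.
suff H: forall n, h (inord n) = 0 /\ h (inord n.+1) = 0.
  by move=> k; rewrite -(inord_val k); case: (H k).
have e0 : inord 0 = ord0 :> 'I_d.+1 by apply: val_inj; rewrite /= inordK.
elim => [|n [IH1 IH2]].
  rewrite e0 h0; split => //.
  have := eh ord0; rewrite colsum //= e0 h0 mul0r add0r mulr0 => /eqP.
  rewrite mulf_eq0 => /orP [/eqP //|]; rewrite (negbTE (Ynz _ _ _)) //.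
  by rewrite /= inordK //; lia.
split => //.
case: (ltnP n.+2 d.+1) => hn; last by rewrite inord_out // h0.
have := eh (inord n.+1); rewrite colsum // inordK ?(ltnW hn) //= IH1 IH2 mul0r add0r mulr0 => /eqP.
rewrite mulf_eq0 => /orP [/eqP //|]; rewrite (negbTE (Ynz _ _ _)) //.
by rewrite /= !inordK //; lia.
Qed.

Lemma core {F : fieldType} {d} (Y : 'M[F]_d.+1) th0 th1 (t g : 'I_d.+1 -> F) a :
 (2 <= d)%N -> trid Y -> injective t -> eigf Y th0 g -> g ord0 != 0 ->
 eigf Y th1 (fun k => g k * (t k - a)) ->
 forall i : 'I_d.+1, (1 <= i <= d.-1)%N ->
   th0 * ((t (inord i.-1) - t (inord 1)) / (t i - t ord0)) != th1 /\
   th0 * ((t (inord i.+1) - t (inord 1)) / (t i - t ord0)) != th1.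
Proof.
move=> d2 tY tinj eg g0 eu.
have [Yz Ynz] := tY.
have e0 : inord 0 = ord0 :> 'I_d.+1 by apply: val_inj; rewrite /= inordK.
have step : forall j : 'I_d.+1,
  (g (inord j.-1) * Y (inord j.-1) j) * (t (inord j.-1) - t (inord j.+1)) =
    th1 * (g j * (t j - a)) - (t (inord j.+1) - a) * (th0 * g j) /\
  (g (inord j.+1) * Y (inord j.+1) j) * (t (inord j.+1) - t (inord j.-1)) =
    th1 * (g j * (t j - a)) - (t (inord j.-1) - a) * (th0 * g j).
  move=> j; rewrite -(eg j) -(eu j) !(colsum _ _ _ d2 tY); split; ring.
have tneq : forall j : 'I_d.+1, t (inord j.-1) - t (inord j.+1) != 0.
  by move=> j; rewrite subr_eq0 (inj_eq tinj) inord_neq.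
have R : th0 * (t (inord 1) - a) = th1 * (t ord0 - a).
  have E1 := eg ord0; have E2 := eu ord0.
  rewrite (colsum _ _ _ d2 tY) /= e0 (Yz ord0 ord0) // mulr0 add0r in E1.
  rewrite (colsum _ _ _ d2 tY) /= e0 (Yz ord0 ord0) // mulr0 add0r in E2.
  apply/eqP; rewrite -subr_eq0; apply/eqP.
  apply: (mulfI g0); rewrite mulr0.
  transitivity ((th0 * g ord0) * (t (inord 1) - a) - th1 * (g ord0 * (t ord0 - a))); first ring.
  by rewrite -E1 -E2; ring.
have gnz : forall n, (n <= d)%N -> g (inord n) != 0.
  elim => [|n IH] hn; first by rewrite e0.
  apply/eqP => gz.
  have [S1 _] := step (inord n.+1).
  rewrite inordK // gz /= mul0r !mulr0 subrr in S1.
  have := tneq (inord n.+1); rewrite inordK //= => tn.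
  move/eqP: S1; rewrite mulf_eq0 (negbTE tn) orbF mulf_eq0 (negbTE (IH (ltnW hn))) /=.
  by rewrite (negbTE (Ynz _ _ _)) //= !inordK //; lia.
move=> i /andP [i1 i2].
have ti0 : t i - t ord0 != 0.
  rewrite subr_eq0 (inj_eq tinj); apply/eqP => /(congr1 val) /=; lia.
have [S1 S2] := step i.
split; apply/eqP => E.
- have E' : th0 * (t (inord i.-1) - t (inord 1)) = th1 * (t i - t ord0).
    by rewrite -E mulrA divfK.
  have nz : (g (inord i.+1) * Y (inord i.+1) i) * (t (inord i.+1) - t (inord i.-1)) != 0.
    rewrite !mulf_eq0 !negb_or gnz /=; last by lia.
    rewrite (Ynz _ _) /=; last by rewrite inordK //; lia.
    by rewrite subr_eq0 (inj_eq tinj) eq_sym inord_neq.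
  move: nz; rewrite S2.
  have -> : th1 * (g i * (t i - a)) - (t (inord i.-1) - a) * (th0 * g i) =
     (g i * (th1 * (t i - t ord0) - th0 * (t (inord i.-1) - t (inord 1)))
       + g i * (th1 * (t ord0 - a) - th0 * (t (inord 1) - a))) by ring.
  by rewrite E' R !subrr !mulr0 addr0 eqxx.
- have E' : th0 * (t (inord i.+1) - t (inord 1)) = th1 * (t i - t ord0).
    by rewrite -E mulrA divfK.
  have nz : (g (inord i.-1) * Y (inord i.-1) i) * (t (inord i.-1) - t (inord i.+1)) != 0.
    rewrite !mulf_eq0 !negb_or gnz /=; last by lia.
    rewrite (Ynz _ _) /=; last by rewrite inordK //; lia.
    by rewrite subr_eq0 (inj_eq tinj) inord_neq.
  move: nz; rewrite S1.
  have -> : th1 * (g i * (t i - a)) - (t (inord i.+1) - a) * (th0 * g i) =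
     (g i * (th1 * (t i - t ord0) - th0 * (t (inord i.+1) - t (inord 1)))
       + g i * (th1 * (t ord0 - a) - th0 * (t (inord 1) - a))) by ring.
  by rewrite E' R !subrr !mulr0 addr0 eqxx.
Qed.

Lemma eigf_mx {F : fieldType} {d} (M Y : 'M[F]_d.+1) th r :
  M *m Y = th *: M -> eigf Y th (fun k => M r k).
Proof. by move=> h j; have := congr1 (fun N : 'M_d.+1 => N r j) h; rewrite !mxE. Qed.

Lemma eigf_lin {F : fieldType} {d} (Y : 'M[F]_d.+1) th h1 h2 c :
  eigf Y th h1 -> eigf Y th h2 -> eigf Y th (fun k => h1 k - c * h2 k).
Proof.
move=> e1 e2 j; under eq_bigr do rewrite mulrBl -mulrA.
by rewrite sumrB -mulr_sumr e1 e2; ring.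
Qed.

Lemma eigf_ext {F : fieldType} {d} (Y : 'M[F]_d.+1) th h1 h2 :
  (forall k, h1 k = h2 k) -> eigf Y th h1 -> eigf Y th h2.
Proof. by move=> e e1 j; rewrite -e -(e1 j); apply: eq_bigr => k _; rewrite e. Qed.

Lemma unit_cancel {F : fieldType} {d} (P M : 'M[F]_d.+1) :
  P \in unitmx -> M *m P = 0 -> M = 0.
Proof. by move=> Pu h; rewrite -(mulmxK Pu M) h mul0mx. Qed.

Lemma unit_cancel_l {F : fieldType} {d} (P M : 'M[F]_d.+1) :
  P \in unitmx -> P *m M = 0 -> M = 0.
Proof. by move=> Pu h; rewrite -(mulKmx Pu M) h mulmx0. Qed.

Lemma delta_nz {F : fieldType} {d} (i j : 'I_d.+1) : delta_mx i j != 0 :> 'M[F]_d.+1.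
Proof. by apply/eqP => /matrixP /(_ i j); rewrite !mxE !eqxx /= => /eqP; rewrite oner_eq0. Qed.

Lemma delta_sandwich {F : fieldType} {d} (Y : 'M[F]_d.+1) i j :
  delta_mx i i *m Y *m delta_mx j j = Y i j *: delta_mx i j.
Proof.
rewrite -(mul_delta_mx (0 : 'I_1) i i) -(mul_delta_mx (0 : 'I_1) j j).
rewrite !mulmxA -(mulmxA (delta_mx i 0)) -rowE -(mulmxA _ _ (delta_mx j 0)) -colE.
rewrite [col j (row i Y)]mx11_scalar !mxE mul_mx_scalar -scalemxAl mul_delta_mx.
by [].
Qed.

Lemma trace_delta {F : fieldType} {d} (k : 'I_d.+1) : \tr (delta_mx k k : 'M[F]_d.+1) = 1.
Proof.
rewrite /mxtrace (bigD1 k) //= mxE !eqxx big1 ?addr0 // => a ak.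
by rewrite mxE (negbTE ak).
Qed.

Lemma entry_diag {F : fieldType} {n} (M : 'M[F]_n) (t : 'I_n -> F) r a :
  (M *m diag_mx (\row_i t i)) r a = M r a * t a.
Proof. by rewrite mul_mx_diag !mxE. Qed.

Lemma entry_add {F : fieldType} {n} (M N : 'M[F]_n) r a : (M + N) r a = M r a + N r a.
Proof. by rewrite mxE. Qed.

Theorem lemma7p7 (F : fieldType) (d : nat) (Es : 'I_d.+1 -> 'M[F]_d.+1)
  (A : 'M[F]_d.+1) (E : 'I_d.+1 -> 'M[F]_d.+1) (th ths : 'I_d.+1 -> F) :
  (3 <= d)%N ->
  orth_idempotent_system Es ->
  (forall i j : 'I_d.+1, ((i.+1 < j) || (j.+1 < i))%N -> Es i *m A *m Es j = 0) ->
  (forall i j : 'I_d.+1, ((i.+1 == j) || (j.+1 == i))%N -> Es i *m A *m Es j != 0) ->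
  primitive_idempotents A th E ->
  bipartite Es A ->
  injective ths ->
  let Astar := \sum_i ths i *: Es i in
  normalizing Es A (th ord0) ->
  Delta_adj E Astar ord0 (inord 1) ->
  (forall j : 'I_d.+1, j != inord 1 -> ~~ Delta_adj E Astar ord0 j) ->
  forall i : 'I_d.+1, (1 <= i <= d.-1)%N ->
    th ord0 * ((ths (inord i.-1) - ths (inord 1)) / (ths i - ths ord0)) != th (inord 1) /\
    th ord0 * ((ths (inord i.+1) - ths (inord 1)) / (ths i - ths ord0)) != th (inord 1).
Proof.
move=> d3 [Esorth _] Afar Anear [thinj [Enz [Eorth [Esum [AE EA]]]]] bip tinj Astar
  [P [Y [Pu PEs APY _]]] _ nadj.
have d2 : (2 <= d)%N by apply: ltnW.
have EsP : forall i, Es i *m P = P *m delta_mx i i.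
  have key : forall i b, Es i *m (P *m delta_mx b b) = if i == b then P *m delta_mx b b else 0.
    move=> i b.
    have -> : P *m delta_mx b b = col b P *m delta_mx 0 b by rewrite colE -mulmxA mul_delta_mx.
    have h : Es i *m col b P = if i == b then col b P else 0.
      by rewrite -PEs mulmxA Esorth; case: eqP => [->|_]; rewrite ?mul0mx.
    by rewrite mulmxA h; case: (i == b); rewrite ?mul0mx.
  move=> i; rewrite -[Es i *m P]mulmx1 mx1_sum_delta !mulmx_sumr (bigD1 i) //= big1.
    by rewrite addr0 -mulmxA key eqxx.
  by move=> b bi; rewrite -mulmxA key eq_sym (negbTE bi).
have Yentry : forall i j, Es i *m A *m Es j *m P = Y i j *: (P *m delta_mx i j).
  move=> i j; rewrite -mulmxA EsP mulmxA -(mulmxA (Es i)) APY mulmxA EsP.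
  by rewrite -!mulmxA (mulmxA (delta_mx i i)) delta_sandwich scalemxAr.
have trEs : forall k, \tr (Es k *m A) = Y k k.
  move=> k.
  have -> : Es k *m A = P *m (delta_mx k k *m Y *m invmx P).
    by rewrite -[Es k *m A](mulmxK Pu) -(mulmxA (Es k) A P) APY mulmxA EsP !mulmxA.
  rewrite mxtrace_mulC mulmxKV //.
  rewrite -{1}(mul_delta_mx k k k) -mulmxA mxtrace_mulC delta_sandwich.
  by rewrite mxtraceZ trace_delta mulr1.
have tY : trid Y.
  split.
    move=> k j kj; case: (eqVneq k j) => [<-|nkj]; first by rewrite -trEs bip.
    have hf : ((k.+1 < j) || (j.+1 < k))%N.
      by move: kj nkj; rewrite -(inj_eq val_inj) /=; lia.
    have := Yentry k j; rewrite Afar // mul0mx => /esym/eqP; rewrite scaler_eq0.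
    case/orP => [/eqP //|/eqP h]; exfalso.
    by move: (delta_nz k j : delta_mx k j != 0 :> 'M[F]_d.+1); rewrite (unit_cancel_l _ _ Pu h) eqxx.
  move=> k j kj; apply/eqP => Y0; move: (Anear k j kj) => /eqP; apply.
  by apply: (unit_cancel _ _ Pu); rewrite Yentry Y0 scale0r.
pose E0 := E ord0; pose E1 := E (inord 1).
pose Gm := E0 *m P.
have GmY : Gm *m Y = th ord0 *: Gm.
  by rewrite /Gm -mulmxA -APY mulmxA EA -scalemxAl.
have Gmnz : Gm != 0.
  by apply/eqP => h; move: (Enz ord0); rewrite -/E0 (unit_cancel _ _ Pu h) eqxx.
case: (pickP (fun rk : 'I_d.+1 * 'I_d.+1 => Gm rk.1 rk.2 != 0)) => [[r k] /= Hrk | H]; last first.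
  exfalso; move/eqP: Gmnz; apply; apply/matrixP => a b; rewrite [X in _ = X]mxE; apply/eqP.
  by have := H (a, b); rewrite /= => /negbT; rewrite negbK.
pose G := fun k : 'I_d.+1 => (Gm r k : F).
have eg : eigf Y (th ord0) G := eigf_mx _ _ _ r GmY.
have G0 : G ord0 != 0.
  by apply/eqP => h; move: Hrk; rewrite -/(G k) (rec0 _ _ _ d2 tY eg h k) eqxx.
have AstarP : Astar *m P = P *m diag_mx (\row_i ths i).
  rewrite /Astar mulmx_suml diag_mx_sum_delta mulmx_sumr; apply: eq_bigr => i _.
  by rewrite -scalemxAl EsP mxE -scalemxAr.
have n10 : (inord 1 : 'I_d.+1) != ord0.
  by apply/eqP => /(congr1 val); rewrite /= inordK //; lia.
have E0As : E0 *m Astar = E0 *m Astar *m E0 + E0 *m Astar *m E1.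
  rewrite -{1}[E0 *m Astar]mulmx1 -Esum mulmx_sumr (bigD1 ord0) //= (bigD1 (inord 1)) //=.
  rewrite big1 ?addr0 // => j /andP [j0 j1].
  by have := nadj j j1; rewrite /Delta_adj eq_sym j0 /= negbK => /eqP.
pose H0 := E0 *m Astar *m E0 *m P; pose H1 := E0 *m Astar *m E1 *m P.
have H0Y : H0 *m Y = th ord0 *: H0.
  by rewrite /H0 -mulmxA -APY mulmxA -(mulmxA (E0 *m Astar)) EA -scalemxAr -scalemxAl.
have H1Y : H1 *m Y = th (inord 1) *: H1.
  by rewrite /H1 -mulmxA -APY mulmxA -(mulmxA (E0 *m Astar)) EA -scalemxAr -scalemxAl.
have Gdiag : forall k, G k * ths k = H0 r k + H1 r k.
  move=> a; have : Gm *m diag_mx (\row_i ths i) = H0 + H1.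
    by rewrite /Gm -mulmxA -AstarP mulmxA E0As mulmxDl.
  by move/(congr1 (fun N : 'M_d.+1 => N r a)); rewrite entry_diag entry_add.
pose c := H0 r ord0 / G ord0.
have eq := eigf_lin _ _ _ _ c (eigf_mx _ _ _ r H0Y) eg.
have hq := rec0 _ _ _ d2 tY eq (etrans (congr1 (fun x => H0 r ord0 - x)
   (divfK G0 (H0 r ord0))) (subrr _)).
have eu : eigf Y (th (inord 1)) (fun k => G k * (ths k - c)).
  apply: eigf_ext (eigf_mx _ _ _ r H1Y) => a.
  have e1 := Gdiag a; have e2 := hq a.
  have e3 : H0 r a = c * G a by apply/eqP; rewrite -subr_eq0 e2.
  by rewrite mulrBr e1 e3; ring.
exact: (core _ _ _ _ _ _ d2 tY tinj eg G0 eu).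
Qed.
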